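(* Let $M,N,m,n$ be integers with $0\le m\le M$, $0\le n\le N$, let $\bm A$ be a real $2^m\times 2^n$ matrix and $\bm B$ a real $2^{M-m}\times 2^{N-n}$ matrix. Then for any integers $m',n'$ with $0\le m'\le M$, $0\le n'\le N$, $$\|\mathcal R_{m',n'}[\bm A\otimes\bm B]\|_S=\|\mathcal R_{m\wedge m',\,n\wedge n'}[\bm A]\|_S\cdot\|\mathcal R_{(m'-m)_+,\,(n'-n)_+}[\bm B]\|_S.$$
   Context: $\|\cdot\|_S$ is the spectral norm; $x_+=\max\{x,0\}$, $a\wedge b=\min\{a,b\}$. For a $p\times q$ matrix, $\mathrm{vec}$ stacks its rows into a $pq$-vector. Rearrangement: for a $2^a\times 2^b$ matrix $\bm C$ and integers $0\le k\le a$, $0\le l\le b$, view $\bm C$ as a $2^k\times 2^l$ array of blocks $\bm C_{i,j}$ each of size $2^{a-k}\times 2^{b-l}$; $\mathcal R_{k,l}[\bm C]$ is the $2^{k+l}\times 2^{a+b-k-l}$ matrix whose rows are $\mathrm{vec}(\bm C_{1,1})',\dots,\mathrm{vec}(\bm C_{1,2^l})',\dots,\mathrm{vec}(\bm C_{2^k,2^l})'$ (blocks in row-major order). Here $\bm A\otimes\bm B$ is $2^M\times 2^N$. *)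

(* Defs.v *)
(* real matrices as functions nat -> nat -> R with explicit
   dimensions; only entries with indices inside the dimensions are ever read. *)
From Stdlib Require Import Reals ClassicalEpsilon.
Open Scope R_scope.

Fixpoint rsum (n : nat) (f : nat -> R) : R :=
  match n with O => 0 | S k => rsum k f + f k end.

Definition mat := nat -> nat -> R.

Definition norm_Ax (r c : nat) (A : mat) (x : nat -> R) : R :=
  sqrt (rsum r (fun i => (rsum c (fun j => A i j * x j)) ^ 2)).

Definition opnorm_set (r c : nat) (A : mat) (t : R) : Prop :=
  exists x : nat -> R, rsum c (fun j => x j ^ 2) <= 1 /\ t = norm_Ax r c A x.

Definition specnorm (r c : nat) (A : mat) : R :=
  epsilon (inhabits 0) (fun s => is_lub (opnorm_set r c A) s).

Definition kron (M N m n : nat) (A B : mat) : mat :=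
  fun i j => A (i / 2 ^ (M - m))%nat (j / 2 ^ (N - n))%nat
           * B (i mod 2 ^ (M - m))%nat (j mod 2 ^ (N - n))%nat.

(* Rearrangement R_{k,l}[C] of a 2^a x 2^b matrix C: row p*2^l+q is vec of
   block C_{p,q} (row-major); column u*2^(b-l)+v is entry (u,v) of the block.
   Result is 2^(k+l) x 2^(a+b-k-l). *)
Definition rearr (a b k l : nat) (C : mat) : mat :=
  fun r c => C ((r / 2 ^ l) * 2 ^ (a - k) + c / 2 ^ (b - l))%nat
               ((r mod 2 ^ l) * 2 ^ (b - l) + c mod 2 ^ (b - l))%nat.

Definition specnorm_rearr (a b k l : nat) (C : mat) : R :=
  specnorm (2 ^ (k + l)) (2 ^ (a + b - k - l)) (rearr a b k l C).

(* Main.v *)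
Require Import Defs.
From Stdlib Require Import Reals ClassicalEpsilon Lia Psatz Arith.
Open Scope R_scope.

Lemma dm_div (x q y : nat) : (y < q)%nat -> ((x*q+y)/q = x)%nat.
Proof. intros H. symmetry. apply Nat.div_unique with y; [exact H| lia]. Qed.
Lemma dm_mod (x q y : nat) : (y < q)%nat -> ((x*q+y) mod q = y)%nat.
Proof. intros H. symmetry. apply Nat.mod_unique with x; [exact H| lia]. Qed.
Lemma dm_lt (x q y a : nat) : (x < a)%nat -> (y < q)%nat -> (x*q+y < a*q)%nat.
Proof. intros. nia. Qed.

Lemma rsum_ext n f g : (forall i, (i < n)%nat -> f i = g i) -> rsum n f = rsum n g.
Proof. induction n; simpl; intros H; auto. rewrite IHn by (intros; apply H; lia). rewrite H by lia. auto. Qed.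
Lemma rsum_plus n f g : rsum n (fun i => f i + g i) = rsum n f + rsum n g.
Proof. induction n; simpl; [lra|]. rewrite IHn. lra. Qed.
Lemma rsum_scal n k f : rsum n (fun i => k * f i) = k * rsum n f.
Proof. induction n; simpl; [lra|]. rewrite IHn. lra. Qed.
Lemma rsum_le n f g : (forall i, (i < n)%nat -> f i <= g i) -> rsum n f <= rsum n g.
Proof. induction n; simpl; intros H; [lra|]. assert (H1:= H n (Nat.lt_succ_diag_r n)). assert (rsum n f <= rsum n g) by (apply IHn; intros; apply H; lia). lra. Qed.
Lemma rsum_zero n : rsum n (fun _ => 0) = 0.
Proof. induction n; simpl; [lra|]. rewrite IHn; lra. Qed.
Lemma rsum_nonneg n f : (forall i, (i < n)%nat -> 0 <= f i) -> 0 <= rsum n f.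
Proof. intros H. rewrite <- (rsum_zero n). apply rsum_le. auto. Qed.
Lemma rsum_term n f k : (forall i, (i < n)%nat -> 0 <= f i) -> (k < n)%nat -> f k <= rsum n f.
Proof. induction n; simpl; intros H Hk; [lia|].
  assert (0 <= rsum n f) by (apply rsum_nonneg; intros; apply H; lia).
  destruct (Nat.eq_dec k n) as [->|Hne].
  - lra.
  - assert (f k <= rsum n f) by (apply IHn; [intros; apply H; lia| lia]).
    assert (0 <= f n) by (apply H; lia). lra. Qed.
Lemma rsum_abs n f : Rabs (rsum n f) <= rsum n (fun i => Rabs (f i)).
Proof. induction n; simpl. rewrite Rabs_R0; lra.
  eapply Rle_trans; [apply Rabs_triang|]. lra. Qed.
Lemma rsum_add n k f : rsum (n + k) f = rsum n f + rsum k (fun j => f (n + j)%nat).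
Proof. induction k; simpl. rewrite Nat.add_0_r; lra. rewrite Nat.add_succ_r. simpl. rewrite IHk. lra. Qed.
Lemma rsum_split p q f : rsum (p * q) f = rsum p (fun i => rsum q (fun j => f (i*q+j)%nat)).
Proof. induction p; simpl; [auto|]. rewrite Nat.add_comm, rsum_add, IHp. auto. Qed.
Lemma rsum_swap p q f : rsum p (fun i => rsum q (fun j => f i j)) = rsum q (fun j => rsum p (fun i => f i j)).
Proof. induction p; simpl. rewrite rsum_zero; auto. rewrite IHp, <- rsum_plus. auto. Qed.

Definition Q r c (A : mat) (x : nat -> R) := rsum r (fun i => (rsum c (fun j => A i j * x j)) ^ 2).
Definition sq c (x : nat -> R) := rsum c (fun j => x j ^ 2).

Lemma sq_nonneg c x : 0 <= sq c x.
Proof. apply rsum_nonneg. intros; nra. Qed.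
Lemma Q_nonneg r c A x : 0 <= Q r c A x.
Proof. apply rsum_nonneg. intros; nra. Qed.

Lemma set_bounded r c A : bound (opnorm_set r c A).
Proof.
  exists (sqrt (rsum r (fun i => (rsum c (fun j => Rabs (A i j))) ^ 2))).
  intros t [x [Hx ->]]. unfold norm_Ax. apply sqrt_le_1_alt. apply rsum_le. intros i Hi.
  assert (Hxj : forall j, (j < c)%nat -> Rabs (x j) <= 1).
  { intros j Hj. assert (x j ^ 2 <= 1).
    { eapply Rle_trans; [|exact Hx]. apply (rsum_term c (fun j => x j ^ 2)); auto. intros; nra. }
    rewrite <- pow2_abs in H. assert (0 <= Rabs (x j)) by apply Rabs_pos. nra. }
  assert (H1 : Rabs (rsum c (fun j => A i j * x j)) <= rsum c (fun j => Rabs (A i j))).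
  { eapply Rle_trans; [apply rsum_abs|]. apply rsum_le. intros j Hj. rewrite Rabs_mult.
    assert (0 <= Rabs (A i j)) by apply Rabs_pos. specialize (Hxj j Hj).
    assert (0 <= Rabs (x j)) by apply Rabs_pos. nra. }
  rewrite <- (pow2_abs (rsum c _)). assert (0 <= Rabs (rsum c (fun j => A i j * x j))) by apply Rabs_pos.
  nra.
Qed.

Lemma zero_in r c A : opnorm_set r c A 0.
Proof. exists (fun _ => 0). split.
  - unfold sq. rewrite (rsum_ext c _ (fun _ => 0)) by (intros; simpl; ring). rewrite rsum_zero; lra.
  - unfold norm_Ax. rewrite (rsum_ext r _ (fun _ => 0)). rewrite rsum_zero, sqrt_0; auto.
    intros i _. rewrite (rsum_ext c _ (fun _ => 0)) by (intros; ring). rewrite rsum_zero. simpl; ring.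
Qed.

Lemma spec_lub r c A : is_lub (opnorm_set r c A) (specnorm r c A).
Proof. unfold specnorm. apply epsilon_spec.
  destruct (completeness (opnorm_set r c A) (set_bounded r c A)) as [s Hs].
  exists 0; apply zero_in. exists s; exact Hs. Qed.

Lemma spec_nonneg r c A : 0 <= specnorm r c A.
Proof. destruct (spec_lub r c A) as [H _]. apply H, zero_in. Qed.

Lemma Q_scal r c A t x : Q r c A (fun j => t * x j) = t ^ 2 * Q r c A x.
Proof. unfold Q. rewrite <- rsum_scal. apply rsum_ext. intros i _.
  rewrite (rsum_ext c _ (fun j => t * (A i j * x j))) by (intros; ring). rewrite rsum_scal. ring. Qed.
Lemma sq_scal c t x : sq c (fun j => t * x j) = t ^ 2 * sq c x.
Proof. unfold sq. rewrite <- rsum_scal. apply rsum_ext. intros; ring. Qed.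

Lemma bound_all r c A x : Q r c A x <= specnorm r c A ^ 2 * sq c x.
Proof.
  set (s := specnorm r c A). assert (Hs0 : 0 <= s) by apply spec_nonneg.
  destruct (spec_lub r c A) as [Hub _].
  destruct (Rle_lt_or_eq_dec 0 (sq c x) (sq_nonneg c x)) as [Hp|Hz].
  - set (t := / sqrt (sq c x)).
    assert (Hsq : sqrt (sq c x) > 0) by (apply sqrt_lt_R0; auto).
    assert (Ht2 : t ^ 2 * sq c x = 1).
    { unfold t. rewrite pow_inv. rewrite pow2_sqrt by lra. field. lra. }
    assert (Hin : opnorm_set r c A (norm_Ax r c A (fun j => t * x j))).
    { exists (fun j => t * x j). split; auto. fold (sq c (fun j => t * x j)). rewrite sq_scal. lra. }
    specialize (Hub _ Hin). unfold norm_Ax in Hub. fold (Q r c A (fun j => t * x j)) in Hub.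
    rewrite Q_scal in Hub.
    assert (HQ := Q_nonneg r c A x).
    assert (Ht0 : 0 < t ^ 2). { unfold t. apply pow_lt. apply Rinv_0_lt_compat. lra. }
    assert (t ^ 2 * Q r c A x <= s ^ 2).
    { rewrite <- (pow2_sqrt (t ^ 2 * Q r c A x)) by (apply Rmult_le_pos; lra).
      assert (0 <= sqrt (t ^ 2 * Q r c A x)) by apply sqrt_pos. unfold s. nra. }
    assert (Hq: Q r c A x = (t^2 * Q r c A x) * sq c x).
    { transitivity (Q r c A x * (t^2 * sq c x)). rewrite Ht2; ring. ring. }
    rewrite Hq. apply Rmult_le_compat_r; lra.
  - rewrite <- Hz. assert (Hx : forall j, (j < c)%nat -> x j = 0).
    { intros j Hj. assert (x j ^ 2 <= 0).
      { rewrite Hz. apply (rsum_term c (fun j => x j ^ 2)); auto. intros; nra. } nra. }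
    unfold Q. rewrite (rsum_ext r _ (fun _ => 0)). rewrite rsum_zero; lra.
    intros i _. rewrite (rsum_ext c _ (fun _ => 0)). rewrite rsum_zero; simpl; ring.
    intros j Hj. rewrite Hx by auto. ring.
Qed.

Lemma div_helper a b k : 0 < b -> a * b <= k -> a <= k / b.
Proof. intros Hb H. unfold Rdiv. replace a with (a * b * / b) by (field; lra).
  apply Rmult_le_compat_r; [left; apply Rinv_0_lt_compat; lra| lra]. Qed.

Lemma lub_mul_le (S1 S2 : R -> Prop) s1 s2 k : is_lub S1 s1 -> is_lub S2 s2 ->
  0 <= s1 -> 0 <= k -> (forall t, S2 t -> 0 <= t) ->
  (forall t1 t2, S1 t1 -> S2 t2 -> t1 * t2 <= k) -> s1 * s2 <= k.
Proof.
  intros [U1 L1] [U2 L2] Hs1 Hk Hpos H.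
  assert (Step1 : forall t2, S2 t2 -> s1 * t2 <= k).
  { intros t2 Ht2. destruct (Rle_lt_or_eq_dec 0 t2 (Hpos _ Ht2)) as [Hp|<-].
    - assert (s1 <= k / t2). { apply L1. intros t1 Ht1. apply div_helper; auto. }
      replace k with (k / t2 * t2) by (field; lra). apply Rmult_le_compat_r; lra.
    - lra. }
  destruct (Rle_lt_or_eq_dec 0 s1 Hs1) as [Hp|<-]; [|lra].
  assert (s2 <= k / s1). { apply L2. intros t2 Ht2. apply div_helper; auto. rewrite Rmult_comm. auto. }
  replace k with (s1 * (k / s1)) by (field; lra). apply Rmult_le_compat_l; lra.
Qed.

Lemma rsum_prod p q f g : rsum p (fun i => rsum q (fun j => f i * g j)) = rsum p f * rsum q g.
Proof. rewrite Rmult_comm, <- rsum_scal. apply rsum_ext. intros i _. rewrite Rmult_comm, <- rsum_scal.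
  apply rsum_ext. intros; ring. Qed.

Definition kr (r2 c2 : nat) (A1 A2 : mat) : mat :=
  fun i j => A1 (i / r2)%nat (j / c2)%nat * A2 (i mod r2)%nat (j mod c2)%nat.

Lemma Q_kron r1 c1 r2 c2 A1 A2 z : (0 < r2)%nat -> (0 < c2)%nat ->
  Q (r1*r2) (c1*c2) (kr r2 c2 A1 A2) z = rsum r1 (fun i1 => rsum r2 (fun i2 =>
    (rsum c1 (fun j1 => A1 i1 j1 * rsum c2 (fun j2 => A2 i2 j2 * z (j1*c2+j2)%nat)))^2)).
Proof. intros Hr Hc. unfold Q. rewrite rsum_split. apply rsum_ext. intros i1 _.
  apply rsum_ext. intros i2 Hi2. f_equal. rewrite rsum_split. apply rsum_ext. intros j1 _.
  rewrite <- rsum_scal. apply rsum_ext. intros j2 Hj2. unfold kr.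
  rewrite !dm_div, !dm_mod by auto. ring. Qed.

Lemma kron_spec r1 c1 r2 c2 A1 A2 : (0 < r2)%nat -> (0 < c2)%nat ->
  specnorm (r1*r2) (c1*c2) (kr r2 c2 A1 A2) = specnorm r1 c1 A1 * specnorm r2 c2 A2.
Proof.
  intros Hr Hc. set (s1 := specnorm r1 c1 A1). set (s2 := specnorm r2 c2 A2).
  assert (H1 : 0 <= s1) by apply spec_nonneg. assert (H2 : 0 <= s2) by apply spec_nonneg.
  destruct (spec_lub (r1*r2) (c1*c2) (kr r2 c2 A1 A2)) as [UK LK].
  apply Rle_antisym.
  - apply LK. intros t [z [Hz ->]]. unfold norm_Ax. fold (Q (r1*r2) (c1*c2) (kr r2 c2 A1 A2) z).
    rewrite <- (sqrt_pow2 (s1*s2)) by nra. apply sqrt_le_1_alt.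
    rewrite Q_kron by auto.
    set (w := fun j1 i2 => rsum c2 (fun j2 => A2 i2 j2 * z (j1*c2+j2)%nat)).
    change (rsum r1 (fun i1 => rsum r2 (fun i2 => (rsum c1 (fun j1 => A1 i1 j1 * w j1 i2))^2))
      <= (s1 * s2)^2).
    rewrite rsum_swap.
    eapply Rle_trans. apply rsum_le with (g := fun i2 => s1^2 * sq c1 (fun j1 => w j1 i2)).
    intros i2 _. apply (bound_all r1 c1 A1 (fun j1 => w j1 i2)).
    rewrite rsum_scal. unfold sq. rewrite rsum_swap.
    eapply Rle_trans. apply Rmult_le_compat_l. nra.
    apply rsum_le with (g := fun j1 => s2^2 * sq c2 (fun j2 => z (j1*c2+j2)%nat)).
    intros j1 _. apply (bound_all r2 c2 A2 (fun j2 => z (j1*c2+j2)%nat)).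
    rewrite rsum_scal. unfold sq. rewrite <- (rsum_split c1 c2 (fun j => z j ^ 2)). fold (sq (c1*c2) z).
    assert (HH := sq_nonneg (c1*c2) z).
    replace ((s1*s2)^2) with (s1^2*(s2^2*1)) by ring.
    apply Rmult_le_compat_l. nra. apply Rmult_le_compat_l. nra. auto.
  - apply (lub_mul_le _ _ _ _ _ (spec_lub r1 c1 A1) (spec_lub r2 c2 A2)); auto.
    + apply spec_nonneg.
    + intros t [y [_ ->]]. apply sqrt_pos.
    + intros t1 t2 [x [Hx ->]] [y [Hy ->]]. apply UK.
      exists (fun j => x (j / c2)%nat * y (j mod c2)%nat). split.
      * assert (E : rsum (c1*c2) (fun j => (x (j / c2)%nat * y (j mod c2)%nat)^2) = sq c1 x * sq c2 y).
        { rewrite rsum_split. unfold sq. rewrite <- rsum_prod.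
          apply rsum_ext. intros j1 _.
          apply rsum_ext. intros j2 Hj2. rewrite dm_div, dm_mod by auto. ring. }
        rewrite E. fold (sq c1 x) in Hx. fold (sq c2 y) in Hy.
        assert (0 <= sq c1 x) by apply sq_nonneg. assert (0 <= sq c2 y) by apply sq_nonneg. nra.
      * unfold norm_Ax. rewrite <- sqrt_mult by (apply Q_nonneg).
        fold (Q (r1*r2) (c1*c2) (kr r2 c2 A1 A2) (fun j => x (j / c2)%nat * y (j mod c2)%nat)).
        rewrite Q_kron by auto. f_equal.
        fold (Q r1 c1 A1 x). fold (Q r2 c2 A2 y). unfold Q. rewrite <- rsum_prod.
        apply rsum_ext. intros i1 _. apply rsum_ext. intros i2 _.
        transitivity ((rsum c1 (fun j1 => A1 i1 j1 * x j1) * rsum c2 (fun j2 => A2 i2 j2 * y j2))^2); [ring|].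
        f_equal. rewrite <- rsum_prod. apply rsum_ext. intros j1 _. rewrite <- rsum_scal.
        apply rsum_ext. intros j2 Hj2. rewrite dm_div, dm_mod by auto. ring.
Qed.

Lemma set_incl r c (C C' : mat) sg tau :
  (forall i j, (i < r)%nat -> (j < c)%nat -> C' i j = C (sg i) (tau j)) ->
  (forall f, rsum r (fun i => f (sg i)) = rsum r f) ->
  (forall f, rsum c (fun j => f (tau j)) = rsum c f) ->
  forall t, opnorm_set r c C t -> opnorm_set r c C' t.
Proof.
  intros HC Hs Ht t [x [Hx ->]]. exists (fun j => x (tau j)). split.
  - rewrite (Ht (fun j => x j ^ 2)). auto.
  - unfold norm_Ax. f_equal.
    transitivity (rsum r (fun i => (fun i => (rsum c (fun j => C i j * x j)) ^ 2) (sg i))).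
    symmetry; apply (Hs (fun i => (rsum c (fun j => C i j * x j)) ^ 2)). apply rsum_ext. intros i Hi. f_equal.
    transitivity (rsum c (fun j => (fun j => C (sg i) j * x j) (tau j))). symmetry; apply (Ht (fun j => C (sg i) j * x j)).
    apply rsum_ext. intros j Hj. rewrite HC; auto.
Qed.

From Stdlib Require Import FunctionalExtensionality PropExtensionality.

Lemma perm_spec r c (C C' : mat) sg tau sg' tau' :
  (forall i j, (i < r)%nat -> (j < c)%nat -> C' i j = C (sg i) (tau j)) ->
  (forall f, rsum r (fun i => f (sg i)) = rsum r f) ->
  (forall f, rsum c (fun j => f (tau j)) = rsum c f) ->
  (forall f, rsum r (fun i => f (sg' i)) = rsum r f) ->
  (forall f, rsum c (fun j => f (tau' j)) = rsum c f) ->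
  (forall i, (i < r)%nat -> (sg' i < r)%nat /\ sg (sg' i) = i) ->
  (forall j, (j < c)%nat -> (tau' j < c)%nat /\ tau (tau' j) = j) ->
  specnorm r c C' = specnorm r c C.
Proof.
  intros HC H1 H2 H3 H4 H5 H6.
  assert (E : opnorm_set r c C' = opnorm_set r c C).
  { apply functional_extensionality. intros t. apply propositional_extensionality. split.
    - apply (set_incl r c C' C sg' tau'); auto. intros i j Hi Hj.
      destruct (H5 i Hi) as [Ha Hb]. destruct (H6 j Hj) as [Hc Hd].
      rewrite HC by auto. rewrite Hb, Hd. auto.
    - apply (set_incl r c C C' sg tau); auto. }
  unfold specnorm. rewrite E. auto.
Qed.

Definition sw (b c d y : nat) : nat :=
  ((y / d / c / b * c + (y / d) mod c) * b + (y / d / c) mod b) * d + y mod d.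

Lemma sw_digits b c d y1 y2 y3 y4 : (y2 < b)%nat -> (y3 < c)%nat -> (y4 < d)%nat ->
  sw b c d (((y1*b+y2)*c+y3)*d+y4) = (((y1*c+y3)*b+y2)*d+y4)%nat.
Proof. intros. unfold sw. rewrite !dm_div by auto. rewrite !dm_mod by auto.
  auto. Qed.

Lemma digits a b c d y : (0 < b)%nat -> (0 < c)%nat -> (0 < d)%nat -> (y < a*b*c*d)%nat ->
  exists y1 y2 y3 y4, (y1 < a)%nat /\ (y2 < b)%nat /\ (y3 < c)%nat /\ (y4 < d)%nat /\
    y = (((y1*b+y2)*c+y3)*d+y4)%nat.
Proof.
  intros Hb Hc Hd Hy.
  exists (y / d / c / b)%nat, ((y / d / c) mod b)%nat, ((y / d) mod c)%nat, (y mod d)%nat.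
  repeat split; try (apply Nat.mod_upper_bound; lia).
  - apply Nat.Div0.div_lt_upper_bound. apply Nat.Div0.div_lt_upper_bound.
    apply Nat.Div0.div_lt_upper_bound. nia.
  -
    pose proof (Nat.div_mod_eq y d). pose proof (Nat.div_mod_eq (y/d) c).
    pose proof (Nat.div_mod_eq (y/d/c) b). nia.
Qed.

Lemma rsum_split4 a b c d g : rsum (a*b*c*d) g =
  rsum a (fun y1 => rsum b (fun y2 => rsum c (fun y3 => rsum d (fun y4 => g (((y1*b+y2)*c+y3)*d+y4)%nat)))).
Proof. rewrite (rsum_split (a*b*c) d), (rsum_split (a*b) c), (rsum_split a b). reflexivity. Qed.

Lemma sw_sum a b c d f : (0 < b)%nat -> (0 < c)%nat -> (0 < d)%nat ->
  rsum (a*b*c*d) (fun y => f (sw b c d y)) = rsum (a*c*b*d) f.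
Proof. intros. rewrite !rsum_split4. apply rsum_ext. intros y1 _.
  rewrite rsum_swap. apply rsum_ext. intros y3 Hy3. apply rsum_ext. intros y2 Hy2.
  apply rsum_ext. intros y4 Hy4. rewrite sw_digits; auto. Qed.

Lemma sw_inv a b c d y : (0 < b)%nat -> (0 < c)%nat -> (0 < d)%nat -> (y < a*b*c*d)%nat ->
  (sw b c d y < a*c*b*d)%nat /\ sw c b d (sw b c d y) = y.
Proof. intros Hb Hc Hd Hy. destruct (digits a b c d y Hb Hc Hd Hy) as (y1&y2&y3&y4&H1&H2&H3&H4&->).
  rewrite sw_digits by auto. rewrite sw_digits by auto. split; auto.
  apply dm_lt; auto. replace (a*c*b)%nat with ((a*c)*b)%nat by lia. apply dm_lt; auto.
  apply dm_lt; auto. Qed.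

Lemma pow_pos2 k : (0 < 2 ^ k)%nat.
Proof. apply Nat.neq_0_lt_0, Nat.pow_nonzero. lia. Qed.

Theorem lemma1 (M N m n : nat) (A B : mat) (m' n' : nat)
  (hm : (m <= M)%nat) (hn : (n <= N)%nat)
  (hm' : (m' <= M)%nat) (hn' : (n' <= N)%nat) :
  specnorm_rearr M N m' n' (kron M N m n A B)
  = specnorm_rearr m n (Nat.min m m') (Nat.min n n') A
    * specnorm_rearr (M - m) (N - n) (m' - m) (n' - n) B.
Proof.
  assert (e1 : (m' + n' = Nat.min m m' + (m'-m) + Nat.min n n' + (n'-n))%nat) by (clear - hm hn hm' hn'; lia).
  assert (e2 : (M + N - m' - n' = (m - Nat.min m m') + (M - m - (m'-m)) + (n - Nat.min n n') + (N - n - (n'-n)))%nat) by (clear - hm hn hm' hn'; lia).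
  assert (e3 : (m + n - Nat.min m m' - Nat.min n n' = (m - Nat.min m m') + (n - Nat.min n n'))%nat) by (clear - hm hn hm' hn'; lia).
  assert (e4 : (M - m + (N - n) - (m'-m) - (n'-n) = (M - m - (m'-m)) + (N - n - (n'-n)))%nat) by (clear - hm hn hm' hn'; lia).
  assert (f1 : (M - m' = (m - Nat.min m m') + (M - m - (m'-m)))%nat) by (clear - hm hn hm' hn'; lia).
  assert (f2 : (M - m = (m' - m) + (M - m - (m'-m)))%nat) by (clear - hm hn hm' hn'; lia).
  assert (f3 : (N - n' = (n - Nat.min n n') + (N - n - (n'-n)))%nat) by (clear - hm hn hm' hn'; lia).
  assert (f4 : (N - n = (n' - n) + (N - n - (n'-n)))%nat) by (clear - hm hn hm' hn'; lia).
  assert (f5 : (n' = Nat.min n n' + (n' - n))%nat) by (clear - hm hn hm' hn'; lia).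
  assert (g1 : (m' - m = 0 \/ m - Nat.min m m' = 0)%nat) by (clear - hm hn hm' hn'; lia).
  assert (g2 : (n' - n = 0 \/ n - Nat.min n n' = 0)%nat) by (clear - hm hn hm' hn'; lia).
  set (al := Nat.min m m') in *. set (be := (m' - m)%nat) in *.
  set (al' := Nat.min n n') in *. set (be' := (n' - n)%nat) in *.
  set (ga := (m - al)%nat) in *. set (de := (M - m - be)%nat) in *.
  set (ga' := (n - al')%nat) in *. set (de' := (N - n - be')%nat) in *.
  assert (hga : (m - al = ga)%nat) by reflexivity. assert (hde : (M - m - be = de)%nat) by reflexivity.
  assert (hga' : (n - al' = ga')%nat) by reflexivity. assert (hde' : (N - n - be' = de')%nat) by reflexivity.
  clearbody al be al' be' ga de ga' de'.
  set (Pa := (2 ^ al)%nat). set (Pb := (2 ^ be)%nat). set (Pa' := (2 ^ al')%nat). set (Pb' := (2 ^ be')%nat).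
  set (Pg := (2 ^ ga)%nat). set (Pd := (2 ^ de)%nat). set (Pg' := (2 ^ ga')%nat). set (Pd' := (2 ^ de')%nat).
  assert (pPb : (0 < Pb)%nat) by apply pow_pos2. assert (pPa' : (0 < Pa')%nat) by apply pow_pos2.
  assert (pPb' : (0 < Pb')%nat) by apply pow_pos2. assert (pPd : (0 < Pd)%nat) by apply pow_pos2.
  assert (pPg' : (0 < Pg')%nat) by apply pow_pos2. assert (pPd' : (0 < Pd')%nat) by apply pow_pos2.
  assert (pPa : (0 < Pa)%nat) by apply pow_pos2. assert (pPg : (0 < Pg)%nat) by apply pow_pos2.
  assert (Hr1 : (2 ^ (m' + n') = Pa * Pb * Pa' * Pb')%nat).
  { rewrite e1, !Nat.pow_add_r. reflexivity. }
  assert (Hc1 : (2 ^ (M + N - m' - n') = Pg * Pd * Pg' * Pd')%nat).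
  { rewrite e2, !Nat.pow_add_r. reflexivity. }
  assert (Hr2 : (2 ^ (al + al') * 2 ^ (be + be') = Pa * Pb * Pa' * Pb')%nat).
  { rewrite !Nat.pow_add_r. fold Pa Pb Pa' Pb'. ring. }
  assert (Hc2 : (2 ^ (m + n - al - al') * 2 ^ (M - m + (N - n) - be - be') = Pg * Pd * Pg' * Pd')%nat).
  { rewrite e3, e4, !Nat.pow_add_r. fold Pg Pd Pg' Pd'. ring. }
  set (rA := rearr m n al al' A). set (rB := rearr (M - m) (N - n) be be' B).
  set (K := kr (2 ^ (be + be')) (2 ^ (M - m + (N - n) - be - be')) rA rB).
  assert (HK : specnorm_rearr m n al al' A * specnorm_rearr (M - m) (N - n) be be' B
               = specnorm (Pa * Pb * Pa' * Pb') (Pg * Pd * Pg' * Pd') K).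
  { unfold specnorm_rearr. rewrite <- kron_spec by apply pow_pos2. rewrite Hr2, Hc2. reflexivity. }
  rewrite HK. unfold specnorm_rearr. rewrite Hr1, Hc1.
  assert (Er : forall f, rsum (Pa * Pb * Pa' * Pb') f = rsum (Pa * Pa' * Pb * Pb') f).
  { intros f. f_equal. ring. }
  assert (Ec : forall f, rsum (Pg * Pd * Pg' * Pd') f = rsum (Pg * Pg' * Pd * Pd') f).
  { intros f. f_equal. ring. }
  apply (perm_spec _ _ _ _ (sw Pb Pa' Pb') (sw Pd Pg' Pd') (sw Pa' Pb Pb') (sw Pg' Pd Pd')).
  5: { intros f. rewrite Ec. apply sw_sum; auto. }
  4: { intros f. rewrite Er. apply sw_sum; auto. }
  3: { intros f. rewrite sw_sum by auto. symmetry; apply Ec. }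
  2: { intros f. rewrite sw_sum by auto. symmetry; apply Er. }
  3: { intros j Hj. assert (Hj' : (j < Pg * Pg' * Pd * Pd')%nat) by (revert Hj; clear; intros; nia).
       destruct (sw_inv _ _ _ _ _ pPg' pPd pPd' Hj'). split; auto. }
  2: { intros i Hi. assert (Hi' : (i < Pa * Pa' * Pb * Pb')%nat) by (revert Hi; clear; intros; nia).
       destruct (sw_inv _ _ _ _ _ pPa' pPb pPb' Hi'). split; auto. }
  intros i j Hi Hj.
  destruct (digits Pa Pb Pa' Pb' i pPb pPa' pPb' Hi) as (x1&x2&x3&x4&Hx1&Hx2&Hx3&Hx4&->).
  destruct (digits Pg Pd Pg' Pd' j pPd pPg' pPd' Hj) as (y1&y2&y3&y4&Hy1&Hy2&Hy3&Hy4&->).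
  rewrite !sw_digits by auto.
  assert (q1 : (2 ^ n' = Pa' * Pb')%nat) by (rewrite f5, Nat.pow_add_r; reflexivity).
  assert (q2 : (2 ^ (M - m') = Pg * Pd)%nat) by (rewrite f1, Nat.pow_add_r; reflexivity).
  assert (q3 : (2 ^ (N - n') = Pg' * Pd')%nat) by (rewrite f3, Nat.pow_add_r; reflexivity).
  assert (q4 : (2 ^ (M - m) = Pb * Pd)%nat) by (rewrite f2, Nat.pow_add_r; reflexivity).
  assert (q5 : (2 ^ (N - n) = Pb' * Pd')%nat) by (rewrite f4, Nat.pow_add_r; reflexivity).
  assert (q6 : (2 ^ (be + be') = Pb * Pb')%nat) by (rewrite Nat.pow_add_r; reflexivity).
  assert (q7 : (2 ^ (M - m + (N - n) - be - be') = Pd * Pd')%nat) by (rewrite e4, Nat.pow_add_r; reflexivity).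
  unfold K, kr, rA, rB, rearr, kron.
  rewrite hga, hde, hga', hde', q1, q2, q3, q4, q5, q6, q7. fold Pa' Pb' Pg Pd Pg' Pd'.
  rewrite (Nat.mul_add_distr_r ((x1*Pb+x2)*Pa') x3 Pb').
  replace (((x1 * Pb + x2) * Pa' * Pb' + x3 * Pb' + x4))%nat with ((x1*Pb+x2)*(Pa'*Pb') + (x3*Pb'+x4))%nat by ring.
  replace (((y1 * Pd + y2) * Pg' + y3) * Pd' + y4)%nat with ((y1*Pd+y2)*(Pg'*Pd') + (y3*Pd'+y4))%nat by ring.
  replace ((((x1 * Pa' + x3) * Pb + x2) * Pb' + x4))%nat with ((x1*Pa'+x3)*(Pb*Pb') + (x2*Pb'+x4))%nat by ring.
  replace ((((y1 * Pg' + y3) * Pd + y2) * Pd' + y4))%nat with ((y1*Pg'+y3)*(Pd*Pd') + (y2*Pd'+y4))%nat by ring.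
  assert (b1 : (x3*Pb'+x4 < Pa'*Pb')%nat) by (apply dm_lt; auto).
  assert (b2 : (y3*Pd'+y4 < Pg'*Pd')%nat) by (apply dm_lt; auto).
  assert (b3 : (x2*Pb'+x4 < Pb*Pb')%nat) by (apply dm_lt; auto).
  assert (b4 : (y2*Pd'+y4 < Pd*Pd')%nat) by (apply dm_lt; auto).
  assert (b5 : (x2*Pd+y2 < Pb*Pd)%nat) by (apply dm_lt; auto).
  assert (b6 : (x4*Pd'+y4 < Pb'*Pd')%nat) by (apply dm_lt; auto).
  rewrite (dm_div _ _ _ b1), (dm_mod _ _ _ b1), (dm_div _ _ _ b2), (dm_mod _ _ _ b2),
    (dm_div _ _ _ b3), (dm_mod _ _ _ b3), (dm_div _ _ _ b4), (dm_mod _ _ _ b4).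
  rewrite (dm_div _ _ _ Hx3), (dm_mod _ _ _ Hx3), (dm_div _ _ _ Hy3), (dm_mod _ _ _ Hy3),
    (dm_div _ _ _ Hx4), (dm_mod _ _ _ Hx4), (dm_div _ _ _ Hy4), (dm_mod _ _ _ Hy4).
  assert (EI : ((x1*Pb+x2)*(Pg*Pd) + (y1*Pd+y2) = (x1*Pg+y1)*(Pb*Pd) + (x2*Pd+y2))%nat).
  { destruct g1 as [Hb|Hg].
    - assert (HPb : Pb = 1%nat) by (unfold Pb; rewrite Hb; reflexivity).
      assert (x2 = 0)%nat by (rewrite HPb in Hx2; clear - Hx2; lia). subst x2. rewrite HPb. ring.
    - assert (HPg : Pg = 1%nat) by (unfold Pg; rewrite Hg; reflexivity).
      assert (y1 = 0)%nat by (rewrite HPg in Hy1; clear - Hy1; lia). subst y1. rewrite HPg. ring. }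
  assert (EJ : ((x3*Pb'+x4)*(Pg'*Pd') + (y3*Pd'+y4) = (x3*Pg'+y3)*(Pb'*Pd') + (x4*Pd'+y4))%nat).
  { destruct g2 as [Hb|Hg].
    - assert (HPb : Pb' = 1%nat) by (unfold Pb'; rewrite Hb; reflexivity).
      assert (x4 = 0)%nat by (rewrite HPb in Hx4; clear - Hx4; lia). subst x4. rewrite HPb. ring.
    - assert (HPg : Pg' = 1%nat) by (unfold Pg'; rewrite Hg; reflexivity).
      assert (y3 = 0)%nat by (rewrite HPg in Hy3; clear - Hy3; lia). subst y3. rewrite HPg. ring. }
  rewrite EI, EJ, (dm_div _ _ _ b5), (dm_mod _ _ _ b5), (dm_div _ _ _ b6), (dm_mod _ _ _ b6).
  reflexivity.
Qed.
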